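(* Let $(G,L)$ be an instance of the List-$k$-Coloring Problem such that $|L(v)|\neq 1$ for every $v\in V(G)$ and $G$ has no $L$-good $P_3$. If $G$ admits a frugal $L$-coloring $\phi$, then for every vertex $v\in V(G)$, the vertices of $N_{G^L}[v]$ receive pairwise distinct colors under $\phi$; in particular $|N_{G^L}(v)|<k$.
   Context: Graphs are finite and simple; $[k]=\{1,\dots,k\}$. A $k$-list-assignment of $G$ is a map $L:V(G)\to 2^{[k]}$; an instance of the List-$k$-Coloring Problem is a pair $(G,L)$. An $L$-coloring of $G$ is a map $\phi:V(G)\to[k]$ with $\phi(u)\ne\phi(v)$ for every edge $uv$ and $\phi(v)\in L(v)$ for all $v$. An $L$-coloring $\phi$ is frugal if for every $v\in V(G)$ and every $i\in L(v)$, $v$ has at most one neighbour $u$ with $\phi(u)=i$. An induced $P_3$ in $G$, written $x_1-x_2-x_3$, consists of distinct vertices with $x_1x_2,x_2x_3\in E(G)$ and $x_1x_3\notin E(G)$; it is $L$-good if $|L(x_1)|,|L(x_2)|,|L(x_3)|\ge 2$ and $L(x_1)\cap L(x_2)$, $L(x_1)\cap L(x_3)$, $L(x_2)\cap L(x_3)$ are all nonempty. $G^L$ is the graph with vertex set $V(G)$ whose edges are the edges $uv\in E(G)$ with $L(u)\cap L(v)\neq\emptyset$. $N_{G^L}(v)$ is the set of neighbours of $v$ in $G^L$ and $N_{G^L}[v]=N_{G^L}(v)\cup\{v\}$. *)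

(* Defs.v *)
(* A simple graph: symmetric irreflexive relation e on a finType T.
   Colors [k] = {1..k} are represented by 'I_k = {0..k-1} (a relabelling). *)
From mathcomp Require Import all_boot.
Set Implicit Arguments. Unset Strict Implicit. Unset Printing Implicit Defensive.

Definition simple_graph (T : finType) (e : rel T) : Prop :=
  symmetric e /\ irreflexive e.

Definition Lcoloring (T : finType) (k : nat) (e : rel T)
  (L : T -> {set 'I_k}) (phi : T -> 'I_k) : Prop :=
  (forall u v, e u v -> phi u != phi v) /\ (forall v, phi v \in L v).

Definition frugal (T : finType) (k : nat) (e : rel T)
  (L : T -> {set 'I_k}) (phi : T -> 'I_k) : Prop :=
  Lcoloring e L phi /\
  forall v i, i \in L v -> #|[set u | e v u & phi u == i]| <= 1.

Definition induced_P3 (T : finType) (e : rel T) (x1 x2 x3 : T) : Prop :=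
  [/\ x1 != x2, x2 != x3, x1 != x3 & [/\ e x1 x2, e x2 x3 & ~~ e x1 x3]].

Definition L_good_P3 (T : finType) (k : nat) (e : rel T)
  (L : T -> {set 'I_k}) (x1 x2 x3 : T) : Prop :=
  induced_P3 e x1 x2 x3 /\
  [/\ 2 <= #|L x1|, 2 <= #|L x2|, 2 <= #|L x3| &
      [/\ L x1 :&: L x2 != set0, L x1 :&: L x3 != set0 & L x2 :&: L x3 != set0]].

Definition GL_edge (T : finType) (k : nat) (e : rel T)
  (L : T -> {set 'I_k}) (u v : T) : bool :=
  e u v && (L u :&: L v != set0).

Definition N_GL (T : finType) (k : nat) (e : rel T)
  (L : T -> {set 'I_k}) (v : T) : {set T} :=
  [set u | GL_edge e L v u].

Definition N_GL_closed (T : finType) (k : nat) (e : rel T)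
  (L : T -> {set 'I_k}) (v : T) : {set T} :=
  v |: N_GL e L v.

(* Main.v *)
Require Import Defs.
From mathcomp Require Import all_boot.

Theorem lemma4p1 (T : finType) (e : rel T) (k : nat)
  (L : T -> {set 'I_k}) (phi : T -> 'I_k) :
  simple_graph e ->
  (forall v, #|L v| != 1) ->
  (forall x1 x2 x3, ~ L_good_P3 e L x1 x2 x3) ->
  frugal e L phi ->
  forall v : T,
    {in N_GL_closed e L v &, injective phi} /\ #|N_GL e L v| < k.
Proof.
move=> [esy eirr] hL1 hgood [[hprop hin] hfrug] v.
have sz2 : forall x y, L x :&: L y != set0 -> 2 <= #|L x|.
  move=> x y /set0Pn [c]; rewrite inE => /andP [cx _].
  have : 0 < #|L x| by apply/card_gt0P; exists c.
  by move: (hL1 x); case: #|L x| => [|[|n]].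
have inj : {in N_GL_closed e L v &, injective phi}.
  have key : forall x y, GL_edge e L v x -> x != v -> y = v -> phi x = phi y -> x = y.
    move=> x y /andP [evx _] _ -> h.
    by move: (hprop _ _ evx); rewrite h eqxx.
  move=> x y; rewrite !inE => /orP [/eqP->|hx] /orP [/eqP->|hy] //.
  - move=> h; apply/esym/(key y v hy) => //.
    by apply/negP => /eqP E; move: hy; rewrite /GL_edge E eirr.
  - move=> h; apply: (key x v hx) => //.
    by apply/negP => /eqP E; move: hx; rewrite /GL_edge E eirr.
  move=> h; case: (eqVneq x y) => // nxy; exfalso.
  move: hx hy => /andP [evx Lvx] /andP [evy Lvy].
  case exy: (e x y); first by move: (hprop _ _ exy); rewrite h eqxx.
  apply: (hgood x v y); split.
    split.
    - by apply/negP => /eqP E; move: evx; rewrite E eirr.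
    - by apply/negP => /eqP E; move: evy; rewrite E eirr.
    - exact: nxy.
    - by split; rewrite ?exy // esy.
  split.
  - by apply: (sz2 x v); rewrite setIC.
  - exact: (sz2 v x).
  - by apply: (sz2 y v); rewrite setIC.
  - split; [by rewrite setIC | | exact: Lvy].
    by apply/set0Pn; exists (phi x); rewrite inE hin h hin.
split => //.
have vn : v \notin N_GL e L v by rewrite inE /GL_edge eirr.
have : #|N_GL_closed e L v| <= k.
  rewrite -(card_in_imset inj).
  by apply: leq_trans (max_card _) _; rewrite card_ord.
by rewrite /N_GL_closed cardsU1 vn.
Qed.
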